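(* Let $H$ be a Hardy field, $f\in H^\times$, $g\in H$, and consider $A(y)=fy''+f'y'+gy$. Suppose that some (equivalently every) germ $F\in\mathcal C^1$ with $F'=f^{-1}$ satisfies $F>\mathbb R$, and some (equivalently every) germ $G\in\mathcal C^1$ with $G'=g$ satisfies $G>\mathbb R$. Then $A(y)=0$ for some oscillating $y\in\mathcal C^{<\infty}$.
   Context: Germs at $+\infty$; $\mathcal C^n$ germs of $n$-times continuously differentiable real functions on intervals $(a,+\infty)$, $\mathcal C^{<\infty}=\bigcap_n\mathcal C^n$. A Hardy field is a subfield of $\mathcal C^{<\infty}$ closed under derivation. For germs, $F>\mathbb R$ means $F(t)\to+\infty$ as $t\to+\infty$. A germ $y$ oscillates if $y(t)=0$ for arbitrarily large $t$ and $y(t)\neq0$ for arbitrarily large $t$. *)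

(* Defs.v *)
From Stdlib Require Import Reals.
From Coquelicot Require Import Coquelicot.
Open Scope R_scope.

Definition eventually_R (P : R -> Prop) : Prop :=
  exists a : R, forall t : R, a < t -> P t.

Definition germ_eq (f g : R -> R) : Prop := eventually_R (fun t => f t = g t).

Definition CnOn (n : nat) (a : R) (f : R -> R) : Prop :=
  forall t : R, a < t ->
    (forall k : nat, (k < n)%nat -> ex_derive (Derive_n f k) t) /\
    continuous (Derive_n f n) t.

Definition germ_Cn (n : nat) (f : R -> R) : Prop := exists a : R, CnOn n a f.

Definition germ_Cinf (f : R -> R) : Prop := forall n : nat, germ_Cn n f.

(* Hardy field: a set of germs (represented as a predicate on representatives,
   saturated under germ equality) which is a subfield of the ring of germs
   C^{<oo} and closed under derivation. *)
Record HardyField (H : (R -> R) -> Prop) : Prop := {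
  hf_saturated : forall f g, H f -> germ_eq f g -> H g;
  hf_Cinf : forall f, H f -> germ_Cinf f;
  hf_zero : H (fun _ => 0);
  hf_one : H (fun _ => 1);
  hf_add : forall f g, H f -> H g -> H (fun t => f t + g t);
  hf_opp : forall f, H f -> H (fun t => - f t);
  hf_mul : forall f g, H f -> H g -> H (fun t => f t * g t);
  hf_inv : forall f, H f -> ~ germ_eq f (fun _ => 0) ->
             exists g, H g /\ germ_eq (fun t => f t * g t) (fun _ => 1);
  hf_der : forall f, H f -> H (Derive f)
}.

Definition tends_to_pinfty (F : R -> R) : Prop :=
  forall M : R, eventually_R (fun t => M < F t).

Definition oscillates (y : R -> R) : Prop :=
  (forall a : R, exists t, a < t /\ y t = 0) /\
  (forall a : R, exists t, a < t /\ y t <> 0).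

(* Main.v *)
Require Import Defs.
From Stdlib Require Import Reals Lra Lia Classical FunctionalExtensionality.
From Coquelicot Require Import Coquelicot.
Open Scope R_scope.

Lemma lip_cont (f : R -> R) (x L : R) : 0 <= L ->
  (forall y, Rabs (f y - f x) <= L * Rabs (y - x)) -> continuous f x.
Proof.
  intros HL Hf. unfold continuous; apply (proj2 (filterlim_locally f (f x))).
  intros eps. assert (Hd : 0 < eps / (L + 1)).
  { apply Rdiv_lt_0_compat; [apply cond_pos|lra]. }
  exists (mkposreal _ Hd). intros y Hy.
  unfold ball in *; simpl in *. unfold AbsRing_ball in *. unfold abs, minus, plus, opp in *; simpl in *.
  change (Rabs (f y - f x) < eps). change (Rabs (y - x) < eps / (L+1)) in Hy.
  eapply Rle_lt_trans. apply Hf.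
  destruct (Rle_lt_or_eq_dec 0 L HL) as [HL'|HL'].
  - apply Rle_lt_trans with (L * (eps / (L+1))). apply Rmult_le_compat_l; lra.
    assert (0 < eps) by apply cond_pos.
    apply Rlt_le_trans with ((L+1) * (eps / (L+1))). apply Rmult_lt_compat_r; lra.
    right; field; lra.
  - subst. rewrite Rmult_0_l. apply cond_pos.
Qed.

Lemma gt_loc (a t : R) : a < t -> locally t (fun x => a < x).
Proof. intro H. apply (locally_open (fun x => a < x)). apply open_gt. auto. exact H. Qed.

Lemma cont_Rmax (c x : R) : continuous (fun t => Rmax t c) x.
Proof.
  apply lip_cont with 1. lra. intro y. rewrite Rmult_1_l.
  unfold Rmax; destruct (Rle_dec y c); destruct (Rle_dec x c);
  unfold Rabs; repeat destruct Rcase_abs; lra.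
Qed.

Lemma mono (f df : R -> R) (a b : R) : a <= b ->
  (forall x, a <= x <= b -> is_derive f x (df x)) ->
  (forall x, a <= x <= b -> 0 <= df x) -> f a <= f b.
Proof.
  intros Hab Hd Hs.
  destruct (MVT_gen f a b df) as [c [Hc Heq]].
  - intros x Hx. apply Hd. rewrite Rmin_left in Hx by lra. rewrite Rmax_right in Hx by lra. lra.
  - intros x Hx. rewrite Rmin_left in Hx by lra. rewrite Rmax_right in Hx by lra.
    apply continuity_pt_filterlim. apply (ex_derive_continuous (K := R_AbsRing) (V := R_NormedModule)). eexists. apply Hd. lra.
  - rewrite Rmin_left in Hc by lra. rewrite Rmax_right in Hc by lra.
    assert (0 <= df c * (b - a)). apply Rmult_le_pos. apply Hs; lra. lra. lra.
Qed.

Lemma compare (phi dphi psi dpsi : R -> R) (a b : R) : a <= b ->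
  (forall x, a <= x <= b -> is_derive phi x (dphi x) /\ is_derive psi x (dpsi x)
     /\ Rabs (dphi x) <= dpsi x) ->
  Rabs (phi b - phi a) <= psi b - psi a.
Proof.
  intros Hab H.
  assert (H1 : (fun x => psi x - phi x) a <= (fun x => psi x - phi x) b).
  { apply (mono (fun x => psi x - phi x) (fun x => dpsi x - dphi x)). lra.
    intros x Hx. destruct (H x Hx) as [A [B _]]. apply (is_derive_minus _ _ _ _ _ B A).
    intros x Hx. destruct (H x Hx) as [_ [_ C]]. pose proof (Rle_abs (dphi x)). lra. }
  assert (H2 : (fun x => psi x + phi x) a <= (fun x => psi x + phi x) b).
  { apply (mono (fun x => psi x + phi x) (fun x => dpsi x + dphi x)). lra.
    intros x Hx. destruct (H x Hx) as [A [B _]]. apply (is_derive_plus _ _ _ _ _ B A).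
    intros x Hx. destruct (H x Hx) as [_ [_ C]]. pose proof (Rabs_le_between (dphi x) (Rabs (dphi x))).
    assert (- Rabs (dphi x) <= dphi x) by (pose proof (Rle_abs (- dphi x)); rewrite Rabs_Ropp in *; lra). lra. }
  simpl in *. unfold Rabs; destruct Rcase_abs; lra.
Qed.

Lemma FTC (f : R -> R) (al t0 tau : R) :
  (forall x, al < x -> continuous f x) -> al < t0 -> al < tau ->
  is_derive (fun s => RInt f t0 s) tau (f tau).
Proof.
  intros Hc H0 Ht. apply is_derive_RInt with (a := t0).
  - apply (locally_open (fun x => al < x)). apply open_gt.
    intros b Hb. apply RInt_correct. apply ex_RInt_continuous.
    intros z Hz. apply Hc. apply Rlt_le_trans with (Rmin t0 b). apply Rmin_glb_lt; lra. lra.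
    exact Ht.
  - apply Hc; exact Ht.
Qed.

Lemma Geo (c eps : R) : 0 < eps -> exists N, c * (/2)^N < eps.
Proof.
  intro He.
  assert (Hl : is_lim_seq (fun n => c * (/2)^n) 0).
  { replace (Finite 0) with (Rbar_mult c 0) by (simpl; f_equal; ring).
    apply is_lim_seq_scal_l. apply is_lim_seq_geom. rewrite Rabs_pos_eq; lra. }
  apply is_lim_seq_spec in Hl. destruct (Hl (mkposreal _ He)) as [N HN].
  exists N. specialize (HN N (le_n N)). simpl in HN.
  pose proof (Rle_abs (c * (/2)^N - 0)). lra.
Qed.

Lemma Zero (x c : R) : (forall n, Rabs x <= c * (/2)^n) -> x = 0.
Proof.
  intro H. destruct (Req_dec x 0) as [|Hx]; auto.
  assert (0 < Rabs x) by (apply Rabs_pos_lt; auto).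
  destruct (Geo c (Rabs x) H0) as [N HN]. specialize (H N). lra.
Qed.

Lemma pow_half_pos n : 0 < (/2)^n.
Proof. apply pow_lt; lra. Qed.

Lemma Gen (u : nat -> R) (c : R) : 0 <= c ->
  (forall n m, Rabs (u (n+m)%nat - u n) <= c * (/2)^n) ->
  is_lim_seq u (real (Lim_seq u)) /\
  forall n, Rabs (real (Lim_seq u) - u n) <= c * (/2)^n.
Proof.
  intros Hc H.
  assert (Hex : ex_finite_lim_seq u).
  { apply ex_lim_seq_cauchy_corr. intro eps.
    destruct (Geo (2*c) eps (cond_pos eps)) as [N HN]. exists N.
    intros n m Hn Hm.
    pose proof (H N (n - N)%nat) as H1. pose proof (H N (m - N)%nat) as H2.
    replace (N + (n - N))%nat with n in H1 by lia.
    replace (N + (m - N))%nat with m in H2 by lia.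
    replace (u n - u m) with ((u n - u N) - (u m - u N)) by ring.
    eapply Rle_lt_trans. apply Rabs_triang. rewrite Rabs_Ropp. lra. }
  destruct Hex as [l Hl].
  rewrite (is_lim_seq_unique _ _ Hl). simpl. split; auto.
  intro n.
  assert (Hl2 : is_lim_seq (fun m => Rabs (u (m + n)%nat - u n)) (Rabs (l - u n))).
  { apply (is_lim_seq_abs _ (Finite (l - u n))).
    apply is_lim_seq_minus with l (u n). apply (is_lim_seq_incr_n u n l). auto.
    apply is_lim_seq_const. simpl. reflexivity. }
  assert (Hb : forall m, Rabs (u (m + n)%nat - u n) <= c * (/2)^n).
  { intro m. rewrite Nat.add_comm. apply H. }
  pose proof (is_lim_seq_le _ _ _ _ Hb Hl2 (is_lim_seq_const (c * (/2)^n))) as Hle.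
  simpl in Hle. auto.
Qed.

Lemma ball_R (x e y : R) : ball x e y <-> Rabs (y - x) < e.
Proof. unfold ball; simpl; unfold AbsRing_ball, abs, minus, plus, opp; simpl. tauto. Qed.

Lemma Unif (u : nat -> R -> R) (Y : R -> R) (x c : R) :
  (forall n, continuous (u n) x) ->
  locally x (fun y => forall n, Rabs (Y y - u n y) <= c * (/2)^n) ->
  continuous Y x.
Proof.
  intros Hu Hb. unfold continuous; apply (proj2 (filterlim_locally Y (Y x))).
  intro eps. assert (He : 0 < eps / 3) by (pose proof (cond_pos eps); lra).
  destruct (Geo c (eps/3) He) as [N HN].
  pose proof (Hu N) as HN'. unfold continuous in HN'.
  apply (proj1 (filterlim_locally (u N) (u N x))) with (eps := mkposreal _ He) in HN'.
  pose proof (locally_singleton _ _ Hb) as Hx. simpl in Hx.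
  generalize (filter_and _ _ Hb HN'). apply filter_imp. intros y [H1 H2].
  apply ball_R. pose proof (proj1 (ball_R _ _ _) H2) as H3. simpl in H3.
  specialize (H1 N). specialize (Hx N).
  replace (Y y - Y x) with ((Y y - u N y) + (u N y - u N x) - (Y x - u N x)) by ring.
  unfold Rminus at 1. eapply Rle_lt_trans. apply Rabs_triang. rewrite Rabs_Ropp.
  eapply Rle_lt_trans. apply Rplus_le_compat_r. apply Rabs_triang.
  replace (pos eps) with (eps/3 + eps/3 + eps/3) by field. lra.
Qed.

Fixpoint pic (A B : R -> R) (t0 y0 v0 : R) (n : nat) : (R -> R) * (R -> R) :=
  match n with
  | O => (fun _ => 0, fun _ => 0)
  | S m => let p := pic A B t0 y0 v0 m in
     (fun t => y0 + RInt (fun s => A s * snd p s) t0 (Rmax t t0),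
      fun t => v0 + RInt (fun s => B s * fst p s) t0 (Rmax t t0))
  end.

Lemma cont_prod (A v : R -> R) x : continuous A x -> continuous v x ->
  continuous (fun s => A s * v s) x.
Proof. intros. apply (continuous_mult A v x); auto. Qed.

Lemma cont_RInt_max (F : R -> R) (al t0 c x : R) :
  (forall z, al < z -> continuous F z) -> al < t0 ->
  continuous (fun t => c + RInt F t0 (Rmax t t0)) x.
Proof.
  intros HF H0.
  apply (continuous_plus (fun _ => c) (fun t => RInt F t0 (Rmax t t0))).
  apply continuous_const.
  apply (continuous_comp (fun t => Rmax t t0) (fun s => RInt F t0 s)).
  apply cont_Rmax.
  apply (ex_derive_continuous (K := R_AbsRing) (V := R_NormedModule)).
  eexists. apply FTC with al; auto.
  apply Rlt_le_trans with t0; auto. apply Rmax_r.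
Qed.

Lemma pic_cont A B al t0 y0 v0 :
  (forall z, al < z -> continuous A z) -> (forall z, al < z -> continuous B z) -> al < t0 ->
  forall n x, continuous (fst (pic A B t0 y0 v0 n)) x /\ continuous (snd (pic A B t0 y0 v0 n)) x.
Proof.
  intros HA HB H0 n. induction n as [|n IH]; intro x; simpl.
  - split; apply continuous_const.
  - split; apply cont_RInt_max with al; auto; intros z Hz; apply cont_prod; auto; apply IH.
Qed.

Lemma pic_Sy A B t0 y0 v0 n t : fst (pic A B t0 y0 v0 (S n)) t =
  y0 + RInt (fun s => A s * snd (pic A B t0 y0 v0 n) s) t0 (Rmax t t0).
Proof. reflexivity. Qed.
Lemma pic_Sv A B t0 y0 v0 n t : snd (pic A B t0 y0 v0 (S n)) t =
  v0 + RInt (fun s => B s * fst (pic A B t0 y0 v0 n) s) t0 (Rmax t t0).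
Proof. reflexivity. Qed.

Lemma RInt_zero_fun (A : R -> R) a b : RInt (fun s => A s * 0) a b = 0.
Proof.
  rewrite (RInt_ext _ (fun _ => 0)). rewrite RInt_const. unfold scal; simpl; unfold mult; simpl; ring.
  intros; simpl; ring.
Qed.

Lemma step_comp (A u1 u0 : R -> R) (al t0 T K D t : R) :
  al < t0 -> t0 <= T -> 0 <= K -> 0 <= D -> t <= T ->
  (forall z, al < z -> continuous A z) ->
  (forall z, continuous u1 z) -> (forall z, continuous u0 z) ->
  (forall s, t0 <= s <= T -> Rabs (A s) <= K) ->
  (forall s, s <= T -> Rabs (u1 s - u0 s) <= D * exp (2*K*(Rmax s t0 - t0))) ->
  Rabs (RInt (fun s => A s * u1 s) t0 (Rmax t t0) - RInt (fun s => A s * u0 s) t0 (Rmax t t0))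
   <= D / 2 * exp (2*K*(Rmax t t0 - t0)).
Proof.
  intros H0 HT HK HD Ht HA Hu1 Hu0 HAK Hu.
  set (tau := Rmax t t0).
  assert (Htau : t0 <= tau <= T) by (split; [apply Rmax_r | apply Rmax_lub; lra]).
  set (phi := fun x => RInt (fun s => A s * u1 s) t0 x - RInt (fun s => A s * u0 s) t0 x).
  set (psi := fun x => D / 2 * exp (2*K*(x - t0))).
  assert (Hc := compare phi (fun x => A x * u1 x - A x * u0 x) psi (fun x => 2*K*(D/2 * exp (2*K*(x - t0)))) t0 tau (proj1 Htau)).
  assert (Hphi0 : phi t0 = 0).
  { unfold phi. rewrite !RInt_point. unfold zero; simpl; ring. }
  assert (Hpsi : 0 <= psi t0).
  { unfold psi. apply Rmult_le_pos. lra. left; apply exp_pos. }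
  assert (Hfin : Rabs (phi tau - phi t0) <= psi tau - psi t0).
  { apply Hc. intros x Hx. cbv beta. split; [|split].
    - unfold phi. apply (is_derive_minus (fun x => RInt (fun s => A s * u1 s) t0 x)
                             (fun x => RInt (fun s => A s * u0 s) t0 x) x (A x * u1 x) (A x * u0 x)).
      + apply (FTC (fun s => A s * u1 s) al); auto. intros; apply cont_prod; auto. lra.
      + apply (FTC (fun s => A s * u0 s) al); auto. intros; apply cont_prod; auto. lra.
    - unfold psi. auto_derive. auto. unfold Rminus. ring.
    - replace (A x * u1 x - A x * u0 x) with (A x * (u1 x - u0 x)) by ring.
      rewrite Rabs_mult.
      assert (Hm : Rmax x t0 = x) by (apply Rmax_left; lra).
      specialize (Hu x ltac:(lra)). rewrite Hm in Hu.
      replace (2 * K * (D / 2 * exp (2 * K * (x - t0)))) with (K * (D * exp (2 * K * (x - t0)))) by field.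
      apply Rmult_le_compat. apply Rabs_pos. apply Rabs_pos. apply HAK; lra. auto. }
  rewrite Hphi0, Rminus_0_r in Hfin. unfold phi in Hfin. fold tau. fold tau in Hfin.
  unfold psi in *. lra.
Qed.

Lemma pic_step A B al t0 y0 v0 T K :
  al < t0 -> t0 <= T -> 0 <= K ->
  (forall z, al < z -> continuous A z) -> (forall z, al < z -> continuous B z) ->
  (forall s, t0 <= s <= T -> Rabs (A s) <= K /\ Rabs (B s) <= K) ->
  forall n t, t <= T ->
  Rabs (fst (pic A B t0 y0 v0 (S n)) t - fst (pic A B t0 y0 v0 n) t)
    <= (Rabs y0 + Rabs v0) * (/2)^n * exp (2*K*(Rmax t t0 - t0)) /\
  Rabs (snd (pic A B t0 y0 v0 (S n)) t - snd (pic A B t0 y0 v0 n) t)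
    <= (Rabs y0 + Rabs v0) * (/2)^n * exp (2*K*(Rmax t t0 - t0)).
Proof.
  intros H0 HT HK HA HB HAB n. induction n as [|n IH]; intros t Ht.
  - rewrite pic_Sy, pic_Sv. simpl. rewrite !RInt_zero_fun.
    assert (He : 1 <= exp (2 * K * (Rmax t t0 - t0))).
    { pose proof (exp_ineq1_le (2 * K * (Rmax t t0 - t0))).
      assert (0 <= 2 * K * (Rmax t t0 - t0)). apply Rmult_le_pos. lra.
      pose proof (Rmax_r t t0). lra. lra. }
    pose proof (Rabs_pos y0). pose proof (Rabs_pos v0).
    assert (Hce : Rabs y0 + Rabs v0 <= (Rabs y0 + Rabs v0) * exp (2 * K * (Rmax t t0 - t0))).
    { rewrite <- (Rmult_1_r (Rabs y0 + Rabs v0)) at 1. apply Rmult_le_compat_l; lra. }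
    rewrite !Rplus_0_r, !Rminus_0_r. rewrite Rmult_1_r. split; lra.
  - pose proof (pic_cont A B al t0 y0 v0 HA HB H0) as Hc.
    assert (HD : 0 <= (Rabs y0 + Rabs v0) * (/2)^n).
    { apply Rmult_le_pos. pose proof (Rabs_pos y0). pose proof (Rabs_pos v0). lra.
      left; apply pow_half_pos. }
    rewrite (pic_Sy _ _ _ _ _ (S n)), (pic_Sy _ _ _ _ _ n), (pic_Sv _ _ _ _ _ (S n)), (pic_Sv _ _ _ _ _ n).
    split.
    + match goal with |- Rabs (?a + ?b - (?a + ?c)) <= _ => replace (a + b - (a + c)) with (b - c) by ring end.
      replace ((Rabs y0 + Rabs v0) * (/ 2) ^ S n) with ((Rabs y0 + Rabs v0) * (/2)^n / 2) by (simpl; field).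
      apply step_comp with al T; auto; try (intro; apply Hc).
      intros s Hs; apply HAB; auto. intros s Hs; apply IH; auto.
    + match goal with |- Rabs (?a + ?b - (?a + ?c)) <= _ => replace (a + b - (a + c)) with (b - c) by ring end.
      replace ((Rabs y0 + Rabs v0) * (/ 2) ^ S n) with ((Rabs y0 + Rabs v0) * (/2)^n / 2) by (simpl; field).
      apply step_comp with al T; auto; try (intro; apply Hc).
      intros s Hs; apply HAB; auto. intros s Hs; apply IH; auto.
Qed.

Lemma bound_AB (A B : R -> R) (al t0 T : R) : al < t0 ->
  (forall z, al < z -> continuous A z) -> (forall z, al < z -> continuous B z) ->
  exists K, 0 <= K /\ forall s, t0 <= s <= T -> Rabs (A s) <= K /\ Rabs (B s) <= K.
Proof.
  intros H0 HA HB.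
  destruct (bounded_continuity A t0 T) as [MA HMA].
  { intros x Hx. apply HA. lra. }
  destruct (bounded_continuity B t0 T) as [MB HMB].
  { intros x Hx. apply HB. lra. }
  exists (Rmax (Rmax MA MB) 0). split. apply Rmax_r.
  intros s Hs. specialize (HMA s Hs). specialize (HMB s Hs).
  change (Rabs (A s) < MA) in HMA. change (Rabs (B s) < MB) in HMB.
  pose proof (Rmax_l (Rmax MA MB) 0). pose proof (Rmax_l MA MB). pose proof (Rmax_r MA MB).
  split; lra.
Qed.

Lemma pic_cauchy A B al t0 y0 v0 T :
  al < t0 -> t0 <= T ->
  (forall z, al < z -> continuous A z) -> (forall z, al < z -> continuous B z) ->
  exists Cst, 0 <= Cst /\ forall n m t, t <= T ->
  Rabs (fst (pic A B t0 y0 v0 (n+m)) t - fst (pic A B t0 y0 v0 n) t) <= Cst * (/2)^n /\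
  Rabs (snd (pic A B t0 y0 v0 (n+m)) t - snd (pic A B t0 y0 v0 n) t) <= Cst * (/2)^n.
Proof.
  intros H0 HT HA HB.
  destruct (bound_AB A B al t0 T H0 HA HB) as [K [HK HAB]].
  set (C := Rabs y0 + Rabs v0).
  set (E := exp (2 * K * (T - t0))).
  assert (HC : 0 <= C) by (unfold C; pose proof (Rabs_pos y0); pose proof (Rabs_pos v0); lra).
  assert (HE : 0 < E) by apply exp_pos.
  exists (2 * C * E). split. apply Rmult_le_pos; lra.
  assert (Hst := pic_step A B al t0 y0 v0 T K H0 HT HK HA HB HAB).
  assert (HEt : forall t, t <= T -> exp (2*K*(Rmax t t0 - t0)) <= E).
  { intros t Ht. unfold E. assert (Rmax t t0 <= T) by (apply Rmax_lub; lra).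
    destruct (Rle_lt_or_eq_dec (2*K*(Rmax t t0 - t0)) (2*K*(T-t0))).
    apply Rmult_le_compat_l; lra. left; apply exp_increasing; auto. rewrite e; lra. }
  intros n m0 t Ht.
  assert (Hm : forall m, Rabs (fst (pic A B t0 y0 v0 (n+m)) t - fst (pic A B t0 y0 v0 n) t)
       <= 2*C*E*((/2)^n - (/2)^(n+m)) /\
     Rabs (snd (pic A B t0 y0 v0 (n+m)) t - snd (pic A B t0 y0 v0 n) t)
       <= 2*C*E*((/2)^n - (/2)^(n+m))).
  { induction m as [|m IH].
    - rewrite Nat.add_0_r. unfold Rminus; rewrite !Rplus_opp_r, Rabs_R0, Rmult_0_r. lra.
    - rewrite Nat.add_succ_r. destruct (Hst (n+m)%nat t Ht) as [S1 S2].
      pose proof (HEt t Ht) as He.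
      assert (Hp : 0 < (/2)^(n+m)) by apply pow_half_pos.
      assert (Hb : C * (/2)^(n+m) * exp (2*K*(Rmax t t0 - t0)) <= C * (/2)^(n+m) * E).
      { apply Rmult_le_compat_l; auto. apply Rmult_le_pos; lra. }
      fold C in S1, S2.
      assert (Heq : 2*C*E*((/2)^n - (/2)^(S (n+m))) = C * (/2)^(n+m) * E + 2*C*E*((/2)^n - (/2)^(n+m))) by (simpl; field).
      rewrite Heq. destruct IH as [I1 I2].
      split.
      + match goal with |- Rabs (?a - ?b) <= _ => set (aa := a) in *; set (bb := b) in * end.
        match type of I1 with Rabs (?c - _) <= _ => set (cc := c) in * end.
        replace (aa - bb) with ((aa - cc) + (cc - bb)) by ring.
        eapply Rle_trans. apply Rabs_triang. lra.
      + match goal with |- Rabs (?a - ?b) <= _ => set (aa := a) in *; set (bb := b) in * end.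
        match type of I2 with Rabs (?c - _) <= _ => set (cc := c) in * end.
        replace (aa - bb) with ((aa - cc) + (cc - bb)) by ring.
        eapply Rle_trans. apply Rabs_triang. lra. }
  destruct (Hm m0) as [M1 M2].
  assert (0 < (/2)^(n+m0)) by apply pow_half_pos.
  assert (0 <= 2*C*E*(/2)^(n+m0)) by (apply Rmult_le_pos; [apply Rmult_le_pos|]; lra).
  split; lra.
Qed.

Definition solY A B t0 y0 v0 (t : R) : R := real (Lim_seq (fun n => fst (pic A B t0 y0 v0 n) t)).
Definition solV A B t0 y0 v0 (t : R) : R := real (Lim_seq (fun n => snd (pic A B t0 y0 v0 n) t)).

Lemma lim_bound A B al t0 y0 v0 T :
  al < t0 -> t0 <= T ->
  (forall z, al < z -> continuous A z) -> (forall z, al < z -> continuous B z) ->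
  exists Cst, 0 <= Cst /\ forall t n, t <= T ->
  Rabs (solY A B t0 y0 v0 t - fst (pic A B t0 y0 v0 n) t) <= Cst * (/2)^n /\
  Rabs (solV A B t0 y0 v0 t - snd (pic A B t0 y0 v0 n) t) <= Cst * (/2)^n.
Proof.
  intros H0 HT HA HB.
  destruct (pic_cauchy A B al t0 y0 v0 T H0 HT HA HB) as [Cst [HC H]].
  exists Cst. split; auto. intros t n Ht. split.
  - apply (Gen (fun n => fst (pic A B t0 y0 v0 n) t) Cst HC). intros; apply H; auto.
  - apply (Gen (fun n => snd (pic A B t0 y0 v0 n) t) Cst HC). intros; apply H; auto.
Qed.

Lemma sol_cont A B al t0 y0 v0 :
  al < t0 ->
  (forall z, al < z -> continuous A z) -> (forall z, al < z -> continuous B z) ->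
  forall x, continuous (solY A B t0 y0 v0) x /\ continuous (solV A B t0 y0 v0) x.
Proof.
  intros H0 HA HB x.
  set (T := Rmax (x+1) t0).
  assert (HT : t0 <= T) by apply Rmax_r.
  assert (HxT : x < T) by (pose proof (Rmax_l (x+1) t0); unfold T; lra).
  destruct (lim_bound A B al t0 y0 v0 T H0 HT HA HB) as [Cst [HC H]].
  assert (Hloc : locally x (fun y => y < T)).
  { apply (locally_open (fun y => y < T)). apply open_lt. auto. auto. }
  pose proof (pic_cont A B al t0 y0 v0 HA HB H0) as Hc.
  split.
  - apply (Unif (fun n => fst (pic A B t0 y0 v0 n)) _ x Cst). intro; apply Hc.
    apply (filter_imp _ _ (fun y Hy n => proj1 (H y n (Rlt_le _ _ Hy))) Hloc).
  - apply (Unif (fun n => snd (pic A B t0 y0 v0 n)) _ x Cst). intro; apply Hc.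
    apply (filter_imp _ _ (fun y Hy n => proj2 (H y n (Rlt_le _ _ Hy))) Hloc).
Qed.

Lemma sol_eq A B al t0 y0 v0 :
  al < t0 ->
  (forall z, al < z -> continuous A z) -> (forall z, al < z -> continuous B z) ->
  forall t, solY A B t0 y0 v0 t = y0 + RInt (fun s => A s * solV A B t0 y0 v0 s) t0 (Rmax t t0) /\
            solV A B t0 y0 v0 t = v0 + RInt (fun s => B s * solY A B t0 y0 v0 s) t0 (Rmax t t0).
Proof.
  intros H0 HA HB t.
  pose (T := Rmax t t0).
  assert (HT : t0 <= T) by apply Rmax_r.
  assert (HtT : t <= T) by apply Rmax_l.
  destruct (lim_bound A B al t0 y0 v0 T H0 HT HA HB) as [Cst [HC H]].
  destruct (bound_AB A B al t0 T H0 HA HB) as [K [HK HAB]].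
  pose proof (pic_cont A B al t0 y0 v0 HA HB H0) as Hc.
  pose proof (sol_cont A B al t0 y0 v0 H0 HA HB) as Hs.
  set (E := exp (2 * K * (T - t0))).
  assert (HE : 1 <= E).
  { unfold E. pose proof (exp_ineq1_le (2 * K * (T - t0))).
    assert (0 <= 2 * K * (T - t0)) by (apply Rmult_le_pos; lra). lra. }
  assert (HTm : Rmax T t0 = T) by (apply Rmax_left; auto).
  assert (Hexp : exp (2 * K * (Rmax t t0 - t0)) = E) by reflexivity.
  assert (Hw : forall s, 1 <= exp (2 * K * (Rmax s t0 - t0))).
  { intro s. pose proof (exp_ineq1_le (2 * K * (Rmax s t0 - t0))).
    assert (0 <= 2 * K * (Rmax s t0 - t0)) by (apply Rmult_le_pos; [lra| pose proof (Rmax_r s t0); lra]). lra. }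
  split; apply Rminus_diag_uniq; apply (Zero _ (Cst + Cst * E / 2)); intro n.
  - replace (solY A B t0 y0 v0 t - (y0 + RInt (fun s => A s * solV A B t0 y0 v0 s) t0 (Rmax t t0)))
      with ((solY A B t0 y0 v0 t - fst (pic A B t0 y0 v0 (S n)) t) +
            (RInt (fun s => A s * snd (pic A B t0 y0 v0 n) s) t0 (Rmax t t0) -
             RInt (fun s => A s * solV A B t0 y0 v0 s) t0 (Rmax t t0)))
      by (rewrite pic_Sy; ring).
    eapply Rle_trans. apply Rabs_triang.
    assert (H1 := proj1 (H t (S n) HtT)).
    assert (H2 := step_comp A (snd (pic A B t0 y0 v0 n)) (solV A B t0 y0 v0) al t0 T K (Cst * (/2)^n) t
      H0 HT HK ltac:(apply Rmult_le_pos; [lra| left; apply pow_half_pos]) HtT HA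
      ltac:(intro; apply Hc) ltac:(intro; apply Hs)
      ltac:(intros s Hs'; apply HAB; auto)
      ltac:(intros s Hs'; rewrite <- Rabs_Ropp, Ropp_minus_distr;
            eapply Rle_trans; [apply (proj2 (H s n Hs'))|];
            rewrite <- (Rmult_1_r (Cst * (/2)^n)) at 1; apply Rmult_le_compat_l;
            [apply Rmult_le_pos; [lra| left; apply pow_half_pos] | apply Hw])).
    rewrite Hexp in H2. change ((/2)^(S n)) with (/2 * (/2)^n) in H1.
    assert (0 < (/2)^n) by apply pow_half_pos.
    assert (Cst * (/2 * (/2)^n) <= Cst * (/2)^n) by (apply Rmult_le_compat_l; lra).
    assert (Ee : Cst * (/ 2) ^ n / 2 * E = Cst * E / 2 * (/2)^n) by field.
    rewrite Ee in H2. rewrite Rmult_plus_distr_r. lra.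
  - replace (solV A B t0 y0 v0 t - (v0 + RInt (fun s => B s * solY A B t0 y0 v0 s) t0 (Rmax t t0)))
      with ((solV A B t0 y0 v0 t - snd (pic A B t0 y0 v0 (S n)) t) +
            (RInt (fun s => B s * fst (pic A B t0 y0 v0 n) s) t0 (Rmax t t0) -
             RInt (fun s => B s * solY A B t0 y0 v0 s) t0 (Rmax t t0)))
      by (rewrite pic_Sv; ring).
    eapply Rle_trans. apply Rabs_triang.
    assert (H1 := proj2 (H t (S n) HtT)).
    assert (H2 := step_comp B (fst (pic A B t0 y0 v0 n)) (solY A B t0 y0 v0) al t0 T K (Cst * (/2)^n) t
      H0 HT HK ltac:(apply Rmult_le_pos; [lra| left; apply pow_half_pos]) HtT HB
      ltac:(intro; apply Hc) ltac:(intro; apply Hs)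
      ltac:(intros s Hs'; apply HAB; auto)
      ltac:(intros s Hs'; rewrite <- Rabs_Ropp, Ropp_minus_distr;
            eapply Rle_trans; [apply (proj1 (H s n Hs'))|];
            rewrite <- (Rmult_1_r (Cst * (/2)^n)) at 1; apply Rmult_le_compat_l;
            [apply Rmult_le_pos; [lra| left; apply pow_half_pos] | apply Hw])).
    rewrite Hexp in H2. change ((/2)^(S n)) with (/2 * (/2)^n) in H1.
    assert (0 < (/2)^n) by apply pow_half_pos.
    assert (Cst * (/2 * (/2)^n) <= Cst * (/2)^n) by (apply Rmult_le_compat_l; lra).
    assert (Ee : Cst * (/ 2) ^ n / 2 * E = Cst * E / 2 * (/2)^n) by field.
    rewrite Ee in H2. rewrite Rmult_plus_distr_r. lra.
Qed.

Lemma deriv_prim (F : R -> R) (al t0 c t : R) :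
  (forall z, al < z -> continuous F z) -> al < t0 -> t0 < t ->
  is_derive (fun s => c + RInt F t0 (Rmax s t0)) t (F t).
Proof.
  intros HF H0 Ht.
  apply (is_derive_ext_loc (fun s => c + RInt F t0 s)).
  - apply (filter_imp (fun s => t0 < s)). intros s Hs. rewrite Rmax_left; auto. lra.
    apply gt_loc; auto.
  - replace (F t) with (plus 0 (F t)) by (unfold plus; simpl; ring).
    apply (is_derive_plus (fun _ => c) (fun s => RInt F t0 s)).
    apply (is_derive_const (K := R_AbsRing) (V := R_NormedModule)). apply FTC with al; auto. lra.
Qed.

Lemma ode_exists A B al t0 y0 v0 : al < t0 ->
  (forall z, al < z -> continuous A z) -> (forall z, al < z -> continuous B z) ->
  exists y v : R -> R, (forall x, continuous y x /\ continuous v x) /\ y t0 = y0 /\ v t0 = v0 /\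
    forall t, t0 < t -> is_derive y t (A t * v t) /\ is_derive v t (B t * y t).
Proof.
  intros H0 HA HB.
  exists (solY A B t0 y0 v0), (solV A B t0 y0 v0).
  pose proof (sol_eq A B al t0 y0 v0 H0 HA HB) as Heq.
  pose proof (sol_cont A B al t0 y0 v0 H0 HA HB) as Hc.
  split; [auto|]. split; [|split].
  - rewrite (proj1 (Heq t0)). rewrite Rmax_left by lra. rewrite RInt_point. unfold zero; simpl; ring.
  - rewrite (proj2 (Heq t0)). rewrite Rmax_left by lra. rewrite RInt_point. unfold zero; simpl; ring.
  - intros t Ht. split.
    + apply (is_derive_ext (fun s => y0 + RInt (fun s => A s * solV A B t0 y0 v0 s) t0 (Rmax s t0))).
      intro s; symmetry; apply Heq.
      apply (deriv_prim (fun s => A s * solV A B t0 y0 v0 s) al); auto.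
      intros; apply cont_prod; auto; apply Hc.
    + apply (is_derive_ext (fun s => v0 + RInt (fun s => B s * solY A B t0 y0 v0 s) t0 (Rmax s t0))).
      intro s; symmetry; apply Heq.
      apply (deriv_prim (fun s => B s * solY A B t0 y0 v0 s) al); auto.
      intros; apply cont_prod; auto; apply Hc.
Qed.

Lemma dplus (f g : R -> R) (x a b : R) : is_derive f x a -> is_derive g x b ->
  is_derive (fun t => f t + g t) x (a + b).
Proof. intros. apply (is_derive_plus f g); auto. Qed.
Lemma dminus (f g : R -> R) (x a b : R) : is_derive f x a -> is_derive g x b ->
  is_derive (fun t => f t - g t) x (a - b).
Proof. intros. apply (is_derive_minus f g); auto. Qed.
Lemma dmult (f g : R -> R) (x a b : R) : is_derive f x a -> is_derive g x b ->
  is_derive (fun t => f t * g t) x (a * g x + f x * b).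
Proof. intros. apply (is_derive_mult f g); auto. intros; apply Rmult_comm. Qed.
Lemma dconst (c x : R) : is_derive (fun _ => c) x 0.
Proof. apply (is_derive_const (K := R_AbsRing) (V := R_NormedModule)). Qed.
Lemma deq (f : R -> R) (x l l' : R) : is_derive f x l -> l = l' -> is_derive f x l'.
Proof. intros H ->; auto. Qed.

Lemma leighton (h g F G y v : R -> R) (t0 : R) :
  (forall t, t0 < t -> is_derive y t (h t * v t) /\ is_derive v t (- g t * y t)) ->
  (forall t, t0 < t -> 0 <= h t) ->
  (forall t, t0 < t -> is_derive F t (h t)) ->
  (forall t, t0 < t -> is_derive G t (g t)) ->
  (forall M, exists b, forall t, b < t -> M < F t) ->
  (forall M, exists b, forall t, b < t -> M < G t) ->
  forall a, exists t, a < t /\ y t = 0.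
Proof.
  intros Hode Hh HF HG HFi HGi a.
  apply NNPP. intro Hn.
  assert (Hy : forall t, a < t -> y t <> 0).
  { intros t Ht Hy0. apply Hn. exists t. auto. }
  set (a1 := Rmax a t0).
  assert (Ha1 : forall t, a1 < t -> a < t /\ t0 < t).
  { intros t Ht. pose proof (Rmax_l a t0). pose proof (Rmax_r a t0). unfold a1 in Ht. lra. }
  set (w := fun t => v t / y t).
  assert (Hw : forall t, a1 < t -> is_derive w t (- g t - h t * (w t)^2)).
  { intros t Ht. destruct (Ha1 t Ht) as [Hat Ht0]. destruct (Hode t Ht0) as [Dy Dv].
    eapply deq. apply (is_derive_div v y t _ _ Dv Dy (Hy t Hat)).
    unfold w. change (@eq R ((- g t * y t * y t - v t * (h t * v t)) / y t ^ 2) (- g t - h t * (v t / y t) ^ 2)). field. apply Hy; auto. }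
  set (Phi := fun t => w t + G t).
  assert (HPhi : forall t, a1 < t -> is_derive Phi t (- (h t * (w t)^2))).
  { intros t Ht. destruct (Ha1 t Ht) as [Hat Ht0].
    eapply deq. apply (dplus w G t _ _ (Hw t Ht) (HG t Ht0)). ring. }
  assert (Hnonneg : forall t, a1 < t -> 0 <= h t * (w t)^2).
  { intros t Ht. apply Rmult_le_pos. apply Hh, Ha1; auto. apply pow2_ge_0. }
  set (T' := a1 + 1).
  assert (HPdec : forall s t, T' <= s -> s <= t -> Phi t <= Phi s).
  { intros s t Hs Hst.
    assert (- Phi s <= - Phi t); [|lra].
    apply (mono (fun t => - Phi t) (fun t => h t * (w t)^2)). auto.
    intros x Hx. eapply deq. apply (is_derive_opp Phi x). apply HPhi. unfold T' in Hs; lra.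
    unfold opp; simpl; ring.
    intros x Hx. apply Hnonneg. unfold T' in Hs; lra. }
  destruct (HGi (Phi T' + 1)) as [b Hb].
  set (T1 := Rmax b T').
  set (u := fun t => 1 + Phi T' - Phi t).
  assert (Hu1 : forall t, T1 < t -> 1 <= u t).
  { intros t Ht. unfold u. pose proof (Rmax_r b T'). pose proof (HPdec T' t (Rle_refl _) ltac:(unfold T1 in Ht; lra)). lra. }
  assert (Hwu : forall t, T1 < t -> u t < - w t).
  { intros t Ht. pose proof (Rmax_l b T'). specialize (Hb t ltac:(unfold T1 in Ht; lra)).
    unfold u, Phi in *. lra. }
  set (psi := fun t => F t + / u t).
  assert (Hpsi : forall t, T1 < t -> is_derive psi t (h t - h t * (w t)^2 / (u t)^2)).
  { intros t Ht. assert (HT1 : a1 < t) by (pose proof (Rmax_r b T'); unfold T1 in Ht; unfold T' in *; lra).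
    destruct (Ha1 t HT1) as [Hat Ht0].
    assert (Du : is_derive u t (h t * (w t)^2)).
    { eapply deq. apply (dminus (fun t => 1 + Phi T') Phi t 0 _ (dconst _ t) (HPhi t HT1)). ring. }
    assert (Hu0 : u t <> 0) by (pose proof (Hu1 t Ht); lra).
    eapply deq. apply (dplus F (fun t => / u t) t _ _ (HF t Ht0) (is_derive_inv u t _ Du Hu0)).
    field. auto. }
  assert (Hpsi_sign : forall t, T1 < t -> h t - h t * (w t)^2 / (u t)^2 <= 0).
  { intros t Ht. assert (HT1 : a1 < t) by (pose proof (Rmax_r b T'); unfold T1 in Ht; unfold T' in *; lra).
    pose proof (Hu1 t Ht). pose proof (Hwu t Ht).
    assert (Hq : 1 <= (w t)^2 / (u t)^2).
    { apply (Rmult_le_reg_r ((u t)^2)). nra. unfold Rdiv. rewrite Rmult_assoc, Rinv_l by nra. nra. }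
    pose proof (Hh t (proj2 (Ha1 t HT1))).
    replace (h t - h t * (w t)^2 / (u t)^2) with (h t * (1 - (w t)^2 / (u t)^2)) by (field; nra).
    assert (0 <= h t * ((w t)^2 / (u t)^2 - 1)) by (apply Rmult_le_pos; lra).
    nra. }
  set (T2 := T1 + 1).
  destruct (HFi (psi T2)) as [c Hc].
  set (t := Rmax c T2 + 1).
  assert (Ht2 : T2 <= t) by (pose proof (Rmax_r c T2); unfold t; lra).
  assert (Hct : c < t) by (pose proof (Rmax_l c T2); unfold t; lra).
  assert (Hdec : psi t <= psi T2).
  { assert (- psi T2 <= - psi t); [|lra].
    apply (mono (fun t => - psi t) (fun t => - (h t - h t * (w t)^2 / (u t)^2))). auto.
    intros x Hx. eapply deq. apply (is_derive_opp psi x). apply Hpsi. unfold T2 in Hx; lra.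
    unfold opp; simpl; ring.
    intros x Hx. pose proof (Hpsi_sign x ltac:(unfold T2 in Hx; lra)). lra. }
  specialize (Hc t Hct).
  assert (0 < / u t).
  { apply Rinv_0_lt_compat. pose proof (Hu1 t ltac:(unfold T2 in Ht2; lra)). lra. }
  unfold psi in *. lra.
Qed.

Lemma DnS (f : R -> R) k : Derive_n f (S k) = Derive_n (Derive f) k.
Proof.
  induction k as [|k IH]. reflexivity.
  change (Derive_n f (S (S k))) with (Derive (Derive_n f (S k))). rewrite IH. reflexivity.
Qed.

Lemma CnOn_S n a f : CnOn (S n) a f <->
  (forall t, a < t -> ex_derive f t) /\ CnOn n a (Derive f).
Proof.
  unfold CnOn. split.
  - intro H. split.
    + intros t Ht. apply (proj1 (H t Ht) 0%nat). lia.
    + intros t Ht. destruct (H t Ht) as [H1 H2]. split.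
      * intros k Hk. rewrite <- DnS. apply H1. lia.
      * rewrite <- DnS. auto.
  - intros [H1 H2] t Ht. destruct (H2 t Ht) as [H3 H4]. split.
    + intros k Hk. destruct k as [|k]. apply H1; auto. rewrite DnS. apply H3. lia.
    + rewrite DnS. auto.
Qed.

Lemma CnOn_0 a f : CnOn 0 a f <-> forall t, a < t -> continuous f t.
Proof.
  unfold CnOn. split.
  - intros H t Ht. apply (H t Ht).
  - intros H t Ht. split. intros k Hk; lia. apply H; auto.
Qed.

Lemma CnOn_mono n a f : CnOn (S n) a f -> CnOn n a f.
Proof.
  unfold CnOn. intros H t Ht. destruct (H t Ht) as [H1 H2]. split.
  - intros k Hk. apply H1. lia.
  - apply (ex_derive_continuous (K := R_AbsRing) (V := R_NormedModule)). apply H1. lia.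
Qed.

Lemma CnOn_le m n a f : (m <= n)%nat -> CnOn n a f -> CnOn m a f.
Proof.
  intros Hmn. induction Hmn as [|n Hmn IH]; auto. intro H. apply IH. apply CnOn_mono; auto.
Qed.

Lemma CnOn_dom n a b f : a <= b -> CnOn n a f -> CnOn n b f.
Proof. unfold CnOn. intros Hab H t Ht. apply H. lra. Qed.



Lemma CnOn_ext n a f g : (forall t, a < t -> f t = g t) -> CnOn n a f -> CnOn n a g.
Proof.
  revert f g. induction n as [|n IH]; intros f g Hfg Hf.
  - apply CnOn_0. intros t Ht. apply (continuous_ext_loc g f).
    apply (filter_imp (fun x => a < x)). intros; apply Hfg; auto. apply gt_loc; auto.
    apply (proj1 (CnOn_0 a f) Hf); auto.
  - apply CnOn_S in Hf. destruct Hf as [H1 H2]. apply CnOn_S. split.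
    + intros t Ht. apply (ex_derive_ext_loc f g). apply (filter_imp (fun x => a < x)).
      intros; apply Hfg; auto. apply gt_loc; auto. auto.
    + apply (IH (Derive f)); auto. intros t Ht. apply Derive_ext_loc.
      apply (filter_imp (fun x => a < x)). intros; apply Hfg; auto. apply gt_loc; auto.
Qed.

Lemma CnOn_const n a c : CnOn n a (fun _ => c).
Proof.
  revert c. induction n as [|n IH]; intro c.
  - apply CnOn_0. intros; apply continuous_const.
  - apply CnOn_S. split. intros; apply ex_derive_const.
    apply (CnOn_ext n a (fun _ => 0)). intros; rewrite Derive_const; auto. apply IH.
Qed.

Lemma CnOn_plus n a f g : CnOn n a f -> CnOn n a g -> CnOn n a (fun t => f t + g t).
Proof.
  revert f g. induction n as [|n IH]; intros f g Hf Hg.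
  - apply CnOn_0. intros t Ht. apply (continuous_plus f g).
    apply (proj1 (CnOn_0 a f) Hf); auto. apply (proj1 (CnOn_0 a g) Hg); auto.
  - apply CnOn_S in Hf. apply CnOn_S in Hg. destruct Hf as [F1 F2]. destruct Hg as [G1 G2].
    apply CnOn_S. split.
    + intros t Ht. apply (ex_derive_plus f g); auto.
    + apply (CnOn_ext n a (fun t => Derive f t + Derive g t)).
      intros t Ht. rewrite Derive_plus; auto. apply IH; auto.
Qed.

Lemma CnOn_mult n a f g : CnOn n a f -> CnOn n a g -> CnOn n a (fun t => f t * g t).
Proof.
  revert f g. induction n as [|n IH]; intros f g Hf Hg.
  - apply CnOn_0. intros t Ht. apply (continuous_mult f g).
    apply (proj1 (CnOn_0 a f) Hf); auto. apply (proj1 (CnOn_0 a g) Hg); auto.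
  - pose proof (CnOn_mono _ _ _ Hf) as Hf'. pose proof (CnOn_mono _ _ _ Hg) as Hg'.
    apply CnOn_S in Hf. apply CnOn_S in Hg. destruct Hf as [F1 F2]. destruct Hg as [G1 G2].
    apply CnOn_S. split.
    + intros t Ht. apply ex_derive_mult; auto.
    + apply (CnOn_ext n a (fun t => Derive f t * g t + f t * Derive g t)).
      intros t Ht. rewrite Derive_mult; auto. apply CnOn_plus; apply IH; auto.
Qed.

Lemma sys_smooth (A B y v : R -> R) (t0 : R) :
  (forall t, t0 < t -> is_derive y t (A t * v t) /\ is_derive v t (B t * y t)) ->
  forall k a, t0 <= a -> CnOn k a A -> CnOn k a B -> CnOn k a y /\ CnOn k a v.
Proof.
  intros Hode k. induction k as [|k IH]; intros a Ha HA HB.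
  - split; apply CnOn_0; intros t Ht;
    apply (ex_derive_continuous (K := R_AbsRing) (V := R_NormedModule));
    eexists; apply (Hode t); lra.
  - destruct (IH a Ha (CnOn_mono _ _ _ HA) (CnOn_mono _ _ _ HB)) as [Iy Iv].
    split; apply CnOn_S; split.
    + intros t Ht. eexists. apply (Hode t); lra.
    + apply (CnOn_ext k a (fun t => A t * v t)).
      intros t Ht. symmetry. apply is_derive_unique. apply (Hode t); lra.
      apply CnOn_mult; auto. apply CnOn_mono; auto.
    + intros t Ht. eexists. apply (Hode t); lra.
    + apply (CnOn_ext k a (fun t => B t * y t)).
      intros t Ht. symmetry. apply is_derive_unique. apply (Hode t); lra.
      apply CnOn_mult; auto. apply CnOn_mono; auto.
Qed.


Lemma cont_of_C0 f : germ_Cn 0 f -> exists a, forall t, a < t -> continuous f t.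
Proof. intros [a Ha]. exists a. apply (proj1 (CnOn_0 a f) Ha). Qed.

Lemma der_of_C1 f : germ_Cn 1 f -> exists a, forall t, a < t -> ex_derive f t.
Proof. intros [a Ha]. exists a. apply (proj1 (CnOn_S 0 a f) Ha). Qed.

Lemma cont_minusR (f g : R -> R) x : continuous f x -> continuous g x ->
  continuous (fun s => f s - g s) x.
Proof. intros. apply (continuous_minus f g x); auto. Qed.

Theorem mainTheorem15 (H : (R -> R) -> Prop) (f g : R -> R) :
  HardyField H ->
  H f -> ~ germ_eq f (fun _ => 0) ->
  H g ->
  (exists F : R -> R, germ_Cn 1 F /\
     eventually_R (fun t => is_derive F t (/ f t)) /\ tends_to_pinfty F) ->
  (exists G : R -> R, germ_Cn 1 G /\
     eventually_R (fun t => is_derive G t (g t)) /\ tends_to_pinfty G) ->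
  exists y : R -> R, germ_Cinf y /\
    eventually_R (fun t =>
      f t * Derive_n y 2 t + Derive f t * Derive y t + g t * y t = 0) /\
    oscillates y.
Proof.
  intros HH Hf Hf0 Hg [F [_ [[bF HFd] Finf]]] [G [_ [[bG HGd] Ginf]]].
  destruct (hf_inv H HH f Hf Hf0) as [h [Hh [b1 Hfh]]].
  simpl in Hfh.
  pose proof (hf_Cinf H HH h Hh) as Ch.
  pose proof (hf_Cinf H HH g Hg) as Cg.
  pose proof (hf_Cinf H HH f Hf) as Cf.
  destruct (cont_of_C0 h (Ch 0%nat)) as [ah Hhc].
  destruct (cont_of_C0 g (Cg 0%nat)) as [ag Hgc].
  destruct (der_of_C1 h (Ch 1%nat)) as [ah1 Hhd].
  destruct (der_of_C1 f (Cf 1%nat)) as [af Hfd].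
  set (b := Rmax (Rmax (Rmax b1 ah) (Rmax ag ah1)) (Rmax (Rmax af bF) bG)).
  assert (Hb : b1 <= b /\ ah <= b /\ ag <= b /\ ah1 <= b /\ af <= b /\ bF <= b /\ bG <= b).
  { unfold b.
    pose proof (Rmax_l b1 ah). pose proof (Rmax_r b1 ah).
    pose proof (Rmax_l ag ah1). pose proof (Rmax_r ag ah1).
    pose proof (Rmax_l (Rmax b1 ah) (Rmax ag ah1)). pose proof (Rmax_r (Rmax b1 ah) (Rmax ag ah1)).
    pose proof (Rmax_l af bF). pose proof (Rmax_r af bF).
    pose proof (Rmax_l (Rmax af bF) bG). pose proof (Rmax_r (Rmax af bF) bG).
    pose proof (Rmax_l (Rmax (Rmax b1 ah) (Rmax ag ah1)) (Rmax (Rmax af bF) bG)).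
    pose proof (Rmax_r (Rmax (Rmax b1 ah) (Rmax ag ah1)) (Rmax (Rmax af bF) bG)).
    lra. }
  clearbody b. destruct Hb as [Hb1 [Hbh [Hbg [Hbh1 [Hbf [HbF HbG]]]]]].
  assert (Hfh' : forall t, b < t -> f t * h t = 1) by (intros; apply Hfh; lra).
  assert (Hhne : forall t, b < t -> h t <> 0).
  { intros t Ht E. specialize (Hfh' t Ht). rewrite E in Hfh'. lra. }
  assert (HFh : forall t, b < t -> is_derive F t (h t)).
  { intros t Ht. replace (h t) with (/ f t). apply HFd; lra.
    specialize (Hfh' t Ht). assert (f t <> 0) by (intro E; rewrite E in Hfh'; lra).
    field_simplify_eq; auto. }
  assert (Hpos : exists c, b <= c /\ forall t, c < t -> 0 < h t).
  { destruct (classic (exists t1, b < t1 /\ h t1 < 0)) as [[t1 [Ht1 Hneg]] | Hno].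
    - exfalso.
      assert (Hall : forall t, t1 <= t -> h t < 0).
      { intros t Ht. destruct (Rlt_le_dec (h t) 0) as [|Hge]; auto. exfalso.
        assert (Hp : 0 < h t) by (destruct Hge; auto; exfalso; apply (Hhne t); lra).
        assert (Htt : t1 < t) by (destruct Ht; auto; subst; lra).
        destruct (Ranalysis5.IVT_interv h t1 t) as [z [Hz Hz0]]; auto.
        intros x Hx. apply continuity_pt_filterlim. apply Hhc. lra.
        apply (Hhne z); auto. lra. }
      destruct (Finf (F (t1+1))) as [c Hc].
      set (t := Rmax c (t1+1) + 1).
      assert (Ht : t1 + 1 <= t) by (pose proof (Rmax_r c (t1+1)); unfold t; lra).
      assert (Hct : c < t) by (pose proof (Rmax_l c (t1+1)); unfold t; lra).
      specialize (Hc t Hct).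
      assert (- F (t1+1) <= - F t).
      { apply (mono (fun x => - F x) (fun x => - h x)). auto.
        intros x Hx. apply (is_derive_opp F x (h x)). apply HFh. lra.
        intros x Hx. pose proof (Hall x ltac:(lra)). lra. }
      lra.
    - exists b. split. lra. intros t Ht.
      destruct (Rlt_le_dec 0 (h t)) as [|Hle]; auto. exfalso.
      destruct Hle as [Hlt|Heq]. apply Hno. exists t. auto. apply (Hhne t); auto. }
  destruct Hpos as [c [Hbc Hpos]].
  set (t0 := c + 1).
  assert (Hct0 : c < t0) by (unfold t0; lra).
  assert (HAc : forall z, c < z -> continuous h z) by (intros; apply Hhc; lra).
  assert (HBc : forall z, c < z -> continuous (fun t => - g t) z).
  { intros z Hz. apply (continuous_opp g). apply Hgc. lra. }
  destruct (ode_exists h (fun t => - g t) c t0 1 0 Hct0 HAc HBc) as [y1 [v1 [C1 [Y1 [V1 D1]]]]].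
  destruct (ode_exists h (fun t => - g t) c t0 0 1 Hct0 HAc HBc) as [y2 [v2 [C2 [Y2 [V2 D2]]]]].
  assert (HW : forall t, t0 < t -> y1 t * v2 t - v1 t * y2 t = 1).
  { intros t Ht.
    destruct (MVT_gen (fun t => y1 t * v2 t - v1 t * y2 t) t0 t (fun _ => 0)) as [z [_ Hz]].
    - intros x Hx. rewrite Rmin_left, Rmax_right in Hx by lra.
      destruct (D1 x ltac:(lra)) as [Dy1 Dv1]. destruct (D2 x ltac:(lra)) as [Dy2 Dv2].
      eapply deq. apply dminus; apply dmult; eauto. ring.
    - intros x Hx. apply continuity_pt_filterlim.
      apply (cont_minusR (fun t => y1 t * v2 t) (fun t => v1 t * y2 t));
      apply cont_prod; first [apply C1 | apply C2].
    - rewrite Y1, V1, Y2, V2 in Hz. lra. }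
  exists y1. split; [|split].
  - intro n. destruct (Ch n) as [an Han]. destruct (Cg n) as [gn Hgn].
    set (a := Rmax t0 (Rmax an gn)).
    assert (Ha : t0 <= a /\ an <= a /\ gn <= a).
    { unfold a. pose proof (Rmax_l t0 (Rmax an gn)). pose proof (Rmax_r t0 (Rmax an gn)).
      pose proof (Rmax_l an gn). pose proof (Rmax_r an gn). lra. }
    exists a.
    refine (proj1 (sys_smooth h (fun t => - g t) y1 v1 t0 D1 n a _ _ _)).
    + lra.
    + apply (CnOn_dom n an); auto. lra.
    + apply (CnOn_ext n a (fun t => (-1) * g t)). intros; ring.
      apply CnOn_mult. apply CnOn_const. apply (CnOn_dom n gn); auto. lra.
  - exists t0. intros t Ht.
    assert (Htb : b < t) by (unfold t0 in Ht; lra).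
    destruct (D1 t Ht) as [Dy Dv].
    assert (Ey : Derive y1 t = h t * v1 t) by (apply is_derive_unique; auto).
    assert (Ev : Derive v1 t = - g t * y1 t) by (apply is_derive_unique; auto).
    assert (Ey2 : Derive_n y1 2 t = Derive h t * v1 t + h t * Derive v1 t).
    { change (Derive_n y1 2 t) with (Derive (Derive y1) t).
      rewrite (Derive_ext_loc (Derive y1) (fun s => h s * v1 s)).
      apply Derive_mult. apply Hhd; lra. eexists; eauto.
      apply (filter_imp (fun s => t0 < s)). intros s Hs. apply is_derive_unique. apply D1; auto.
      apply gt_loc; auto. }
    assert (E1 : Derive f t * h t + f t * Derive h t = 0).
    { rewrite <- Derive_mult. rewrite (Derive_ext_loc _ (fun _ => 1)). apply Derive_const.
      apply (filter_imp (fun s => b < s)). intros s Hs. apply Hfh'; auto. apply gt_loc; auto.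
      apply Hfd; lra. apply Hhd; lra. }
    assert (E2 : f t * h t = 1) by (apply Hfh'; auto).
    rewrite Ey2, Ey, Ev.
    transitivity (v1 t * (Derive f t * h t + f t * Derive h t) - g t * y1 t * (f t * h t - 1)).
    ring. rewrite E1, E2. ring.
  - split.
    + apply (leighton h g F G y1 v1 t0); auto.
      * intros t Ht. left. apply Hpos. unfold t0 in Ht; lra.
      * intros t Ht. apply HFh. unfold t0 in Ht; lra.
      * intros t Ht. apply HGd. unfold t0 in Ht; lra.
    + intro a. apply NNPP. intro Hn.
      assert (Hz : forall t, Rmax a t0 < t -> y1 t = 0).
      { intros t Ht. apply NNPP. intro Hne. apply Hn. exists t. split; auto.
        pose proof (Rmax_l a t0). lra. }
      set (t := Rmax a t0 + 1).
      assert (Ht : Rmax a t0 < t) by (unfold t; lra).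
      assert (Ht0 : t0 < t) by (pose proof (Rmax_r a t0); lra).
      destruct (D1 t Ht0) as [Dy _].
      assert (E0 : Derive y1 t = 0).
      { rewrite (Derive_ext_loc _ (fun _ => 0)). apply Derive_const.
        apply (filter_imp (fun s => Rmax a t0 < s)). intros s Hs. apply Hz; auto. apply gt_loc; auto. }
      rewrite (is_derive_unique _ _ _ Dy) in E0.
      assert (Hht : 0 < h t) by (apply Hpos; unfold t0 in Ht0; lra).
      assert (Hv : v1 t = 0).
      { apply (Rmult_eq_reg_l (h t)). rewrite Rmult_0_r. auto. lra. }
      pose proof (HW t Ht0). rewrite Hv, (Hz t Ht) in H0. lra.
Qed.
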